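(* Let $\epsilon>0$, $\eta:=\mathrm{i}\epsilon$ and $p:=\frac12-\frac1\eta=\frac12+\frac{\mathrm{i}}{\epsilon}$. Let $\mathfrak{H}_a$ be the Hilbert space with orthonormal basis $\{|j,k,l\rangle: j,k,l\in\mathbb{Z}_{\ge0}\}$ and define on it the operators $\mathbf{b}_{\uparrow}^\dagger|j,k,l\rangle=\sqrt{j+1}|j+1,k,l\rangle$, $\mathbf{b}_{\uparrow}|j,k,l\rangle=\sqrt{j}|j-1,k,l\rangle$, $\mathbf{b}_{\downarrow}^\dagger|j,k,l\rangle=\sqrt{k+1}|j,k+1,l\rangle$, $\mathbf{b}_{\downarrow}|j,k,l\rangle=\sqrt{k}|j,k-1,l\rangle$, $\mathbf{s}^{+}|j,k,l\rangle=l|j,k,l-1\rangle$, $\mathbf{s}^{-}|j,k,l\rangle=(2p-l)|j,k,l+1\rangle$, $\mathbf{s}^{z}|j,k,l\rangle=(p-l)|j,k,l\rangle$. Set \begin{align*} &\mathbf{t}^{+}=\mathbf{b}_{\uparrow},\quad \mathbf{t}^{-}=\eta\,\mathbf{b}_{\uparrow}^\dagger,\quad \mathbf{u}^{+}=\eta\,\mathbf{b}_{\downarrow},\quad \mathbf{u}^{-}=\mathbf{b}_{\downarrow}^\dagger,\\ &\mathbf{v}^{+}=\eta(\mathbf{b}_{\uparrow}\mathbf{b}_{\downarrow}+\mathbf{s}^{+}),\quad \mathbf{v}^{-}=\eta(\mathbf{b}_{\uparrow}^\dagger\mathbf{b}_{\downarrow}^\dagger-\mathbf{s}^{-}),\\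 &\mathbf{l}^{\uparrow}=\eta\big(\mathbf{b}_{\uparrow}^\dagger\mathbf{b}_{\uparrow}+\tfrac12-\mathbf{s}^{z}\big),\quad \mathbf{l}^{\downarrow}=\eta\big(\mathbf{b}_{\downarrow}^\dagger\mathbf{b}_{\downarrow}+\tfrac12-\mathbf{s}^{z}\big),\quad \mathbf{l}^{0}=\mathbb{1}, \end{align*} and $|\mathrm{vac}\rangle=|0,0,0\rangle$. Then these operators generate an irreducible representation of the Lie algebra $\mathfrak{g}$ defined by the commutation relations \begin{align*} &[\mathbf{u}^{+},\mathbf{t}^{\pm}]=[\mathbf{u}^{-},\mathbf{t}^{\pm}]=[\mathbf{u}^{\pm},\mathbf{v}^{\pm}]=[\mathbf{t}^{\pm},\mathbf{v}^{\pm}]=0,\quad [\mathbf{l}^{\uparrow},\mathbf{u}^{\pm}]=[\mathbf{l}^{\downarrow},\mathbf{t}^{\pm}]=[\mathbf{l}^{\uparrow},\mathbf{l}^{\downarrow}]=0,\\ &[\mathbf{l}^{\uparrow},\mathbf{t}^{\pm}]=\mp\eta\,\mathbf{t}^{\pm},\quad [\mathbf{l}^{\downarrow},\mathbf{u}^{\pm}]=\mp\eta\,\mathbf{u}^{\pm},\quad [\mathbf{u}^{+},\mathbf{v}^{\mp}]=\pm\mathbf{t}^{\mp},\quad [\mathbf{t}^{\pm},\mathbf{v}^{\mp}]=\pm\eta\,\mathbf{u}^{\mp},\\ &[\mathbf{l}^{\uparrow},\mathbf{v}^{\pm}]=[\mathbf{l}^{\downarrow},\mathbf{v}^{\pm}]=\mp\eta\,\mathbf{v}^{\pm},\quad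 [\mathbf{v}^{+},\mathbf{v}^{-}]=\eta(\mathbf{l}^{\uparrow}+\mathbf{l}^{\downarrow}),\quad [\mathbf{t}^{+},\mathbf{t}^{-}]=[\mathbf{u}^{+},\mathbf{u}^{-}]=\eta\,\mathbf{l}^{0},\\ &[\mathbf{l}^{\uparrow},\mathbf{l}^{0}]=[\mathbf{l}^{\downarrow},\mathbf{l}^{0}]=[\mathbf{u}^{\pm},\mathbf{l}^{0}]=[\mathbf{v}^{\pm},\mathbf{l}^{0}]=[\mathbf{t}^{\pm},\mathbf{l}^{0}]=0, \end{align*} which moreover satisfies the boundary requirements $\mathbf{l}^{\uparrow}|\mathrm{vac}\rangle=\mathbf{l}^{0}|\mathrm{vac}\rangle=\mathbf{l}^{\downarrow}|\mathrm{vac}\rangle=|\mathrm{vac}\rangle$, $\langle\mathrm{vac}|\mathbf{l}^{\uparrow}=\langle\mathrm{vac}|\mathbf{l}^{0}=\langle\mathrm{vac}|\mathbf{l}^{\downarrow}=\langle\mathrm{vac}|$, $\mathbf{t}^{+}|\mathrm{vac}\rangle=\mathbf{u}^{+}|\mathrm{vac}\rangle=\mathbf{v}^{+}|\mathrm{vac}\rangle=0$, $\langle\mathrm{vac}|\mathbf{t}^{-}=\langle\mathrm{vac}|\mathbf{u}^{-}=\langle\mathrm{vac}|\mathbf{v}^{-}=0$.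
   Context: Operators are understood on the dense domain of finite linear combinations of basis vectors; $\mathbf{b}_\uparrow,\mathbf{b}_\downarrow$ are two canonical bosonic modes and $\mathbf{s}^{\pm},\mathbf{s}^z$ act as a lowest/highest-weight (Verma) module of $\mathfrak{sl}_2$ with complex weight $p$. *)

(* Defs.v *)
(* Complex scalars: an arbitrary numClosedFieldType C
   (e.g. algC, or complex R for R : rcfType); this contains the case C = ℂ. *)
From HB Require Import structures.
From mathcomp Require Import all_boot all_order all_algebra.
Set Implicit Arguments. Unset Strict Implicit. Unset Printing Implicit Defensive.
Import Order.TTheory GRing.Theory Num.Theory.
Local Open Scope ring_scope.

Section Fock.
Variable C : numClosedFieldType.

(* A vector is given by its coefficients on the basis |j,k,l>. *)
Definition vec := nat -> nat -> nat -> C.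
Definition op := vec -> vec.

(* The dense domain: finite linear combinations of basis vectors. *)
Definition fin_supp (v : vec) : Prop :=
  exists N : nat, forall j k l, (N <= j + k + l)%N -> v j k l = 0.

Definition vzero : vec := fun _ _ _ => 0.
Definition vadd (v w : vec) : vec := fun j k l => v j k l + w j k l.
Definition vscale (a : C) (v : vec) : vec := fun j k l => a * v j k l.
Definition vsub (v w : vec) : vec := fun j k l => v j k l - w j k l.

Definition vac : vec := fun j k l => if [&& j == 0%N, k == 0%N & l == 0%N] then 1 else 0.
(* <vac| v : the coefficient of |0,0,0> *)
Definition vac_coef (v : vec) : C := v 0%N 0%N 0%N.

Definition opadd (A B : op) : op := fun v => vadd (A v) (B v).
Definition opsub (A B : op) : op := fun v => vsub (A v) (B v).
Definition opscale (a : C) (A : op) : op := fun v => vscale a (A v).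
Definition opcomp (A B : op) : op := fun v => A (B v).
Definition opid : op := fun v => v.
Definition opzero : op := fun _ => vzero.
Definition comm (A B : op) : op := opsub (opcomp A B) (opcomp B A).

Definition opeq (A B : op) : Prop := forall v, fin_supp v -> A v = B v.

(* Coefficient formulas of the operators.  E.g. b_up |j+1,k,l> = sqrt(j+1)|j,k,l>,
   so the |j,k,l>-coefficient of b_up v is sqrt(j+1) * v(j+1,k,l). *)
Definition b_up : op := fun v j k l => sqrtC (j.+1)%:R * v j.+1 k l.
Definition b_up_dag : op := fun v j k l =>
  if j is j'.+1 then sqrtC (j'.+1)%:R * v j' k l else 0.
Definition b_dn : op := fun v j k l => sqrtC (k.+1)%:R * v j k.+1 l.
Definition b_dn_dag : op := fun v j k l =>
  if k is k'.+1 then sqrtC (k'.+1)%:R * v j k' l else 0.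

Variable p : C.
(* s^+ |j,k,l> = l |j,k,l-1> *)
Definition s_plus : op := fun v j k l => (l.+1)%:R * v j k l.+1.
(* s^- |j,k,l> = (2p - l) |j,k,l+1> *)
Definition s_minus : op := fun v j k l =>
  if l is l'.+1 then (2 * p - l'%:R) * v j k l' else 0.
Definition s_z : op := fun v j k l => (p - l%:R) * v j k l.

End Fock.

Section Rep.
Variable C : numClosedFieldType.
Variable eps : C.

Definition etaE : C := 'i * eps.
Definition pw : C := 2^-1 - etaE^-1.

Definition t_plus : op C := b_up (C:=C).
Definition t_minus : op C := opscale etaE (b_up_dag (C:=C)).
Definition u_plus : op C := opscale etaE (b_dn (C:=C)).
Definition u_minus : op C := b_dn_dag (C:=C).
Definition v_plus : op C :=
  opscale etaE (opadd (opcomp (b_up (C:=C)) (b_dn (C:=C))) (s_plus (C:=C))).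
Definition v_minus : op C :=
  opscale etaE (opsub (opcomp (b_up_dag (C:=C)) (b_dn_dag (C:=C))) (s_minus pw)).
Definition l_up : op C :=
  opscale etaE (opsub (opadd (opcomp (b_up_dag (C:=C)) (b_up (C:=C))) (opscale 2^-1 (@opid C)))
                     (s_z pw)).
Definition l_dn : op C :=
  opscale etaE (opsub (opadd (opcomp (b_dn_dag (C:=C)) (b_dn (C:=C))) (opscale 2^-1 (@opid C)))
                     (s_z pw)).
Definition l_0 : op C := @opid C.

Definition is_generator (A : op C) : Prop :=
  A = t_plus \/ A = t_minus \/ A = u_plus \/ A = u_minus \/ A = v_plus \/
  A = v_minus \/ A = l_up \/ A = l_dn \/ A = l_0.

(* algebraic irreducibility on the dense domain D of finite linear combinations:
   every subspace W of D, invariant under all generators and containing a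
   nonzero vector, is all of D. *)
Definition irreducible_on_D (gens : op C -> Prop) : Prop :=
  forall W : vec C -> Prop,
    (forall v, W v -> fin_supp v) ->
    W (@vzero C) ->
    (forall v w, W v -> W w -> W (vadd v w)) ->
    (forall a v, W v -> W (vscale a v)) ->
    (forall A v, gens A -> W v -> W (A v)) ->
    (exists v, W v /\ v <> @vzero C) ->
    forall v, fin_supp v -> W v.

End Rep.

(* Main.v *)
Require Import Defs.
From HB Require Import structures.
From mathcomp Require Import all_boot all_order all_algebra.
From mathcomp Require Import ring zify.
From Stdlib Require Import FunctionalExtensionality Classical.
Import Order.TTheory GRing.Theory Num.Theory.
Local Open Scope ring_scope.

Section Aux.
Variable C : numClosedFieldType.

Lemma fs_b_up v : fin_supp v -> fin_supp (@b_up C v).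
Proof. move=> [N HN]; exists N => j k l H; rewrite /b_up HN ?mulr0 //; lia. Qed.
Lemma fs_b_dn v : fin_supp v -> fin_supp (@b_dn C v).
Proof. move=> [N HN]; exists N => j k l H; rewrite /b_dn HN ?mulr0 //; lia. Qed.
Lemma fs_s_plus v : fin_supp v -> fin_supp (@s_plus C v).
Proof. move=> [N HN]; exists N => j k l H; rewrite /s_plus HN ?mulr0 //; lia. Qed.
Lemma fs_b_up_dag v : fin_supp v -> fin_supp (@b_up_dag C v).
Proof. move=> [N HN]; exists N.+1 => -[|j] k l H //=; rewrite HN ?mulr0 //; lia. Qed.
Lemma fs_b_dn_dag v : fin_supp v -> fin_supp (@b_dn_dag C v).
Proof. move=> [N HN]; exists N.+1 => j [|k] l H //=; rewrite HN ?mulr0 //; lia. Qed.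
Lemma fs_s_minus p v : fin_supp v -> fin_supp (@s_minus C p v).
Proof. move=> [N HN]; exists N.+1 => j k [|l] H //=; rewrite HN ?mulr0 //; lia. Qed.
Lemma fs_s_z p v : fin_supp v -> fin_supp (@s_z C p v).
Proof. move=> [N HN]; exists N => j k l H; rewrite /s_z HN ?mulr0 //; lia. Qed.
Lemma fs_vscale a v : fin_supp v -> fin_supp (@vscale C a v).
Proof. move=> [N HN]; exists N => j k l H; rewrite /vscale HN ?mulr0 //. Qed.
Lemma fs_vadd v w : fin_supp v -> fin_supp w -> fin_supp (@vadd C v w).
Proof.
move=> [N HN] [M HM]; exists (N + M)%N => j k l H; rewrite /vadd HN ?HM ?addr0 //; lia.
Qed.
Lemma fs_vsub v w : fin_supp v -> fin_supp w -> fin_supp (@vsub C v w).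
Proof.
move=> [N HN] [M HM]; exists (N + M)%N => j k l H; rewrite /vsub HN ?HM ?subr0 //; lia.
Qed.

Lemma fs_gen (eps : C) A v : is_generator eps A -> fin_supp v -> fin_supp (A v).
Proof.
move=> HA Hv.
case: HA => [->|[->|[->|[->|[->|[->|[->|[->|->]]]]]]]];
rewrite /t_plus /t_minus /u_plus /u_minus /v_plus /v_minus /l_up /l_dn /l_0
  /opscale /opadd /opsub /opcomp /opid;
repeat first [ apply: fs_vscale | apply: fs_vsub | apply: fs_vadd | apply: fs_b_up
  | apply: fs_b_dn | apply: fs_s_plus | apply: fs_b_up_dag | apply: fs_b_dn_dag
  | apply: fs_s_minus | apply: fs_s_z | exact: Hv ].
Qed.

End Aux.

Section Irr.
Variable C : numClosedFieldType.

Lemma vext (v w : vec C) : (forall j k l, v j k l = w j k l) -> v = w.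
Proof.
move=> H; apply: functional_extensionality => j;
apply: functional_extensionality => k; apply: functional_extensionality => l; exact: H.
Qed.

Definition Sj n (v : vec C) := forall j k l, (n <= j)%N -> v j k l = 0.
Definition Sk n (v : vec C) := forall j k l, (n <= k)%N -> v j k l = 0.
Definition Sl n (v : vec C) := forall j k l, (n <= l)%N -> v j k l = 0.

Lemma descend (P : vec C -> Prop) (T : op C) (S : nat -> vec C -> Prop) (R : vec C -> Prop) :
 (forall v, P v -> P (T v)) ->
 (forall n v, S n.+1 v -> S n (T v)) ->
 (forall v, S 0%N v -> v = @vzero C) ->
 (forall v, T v = @vzero C -> R v) ->
 forall n v, P v -> v <> @vzero C -> S n v -> exists w, P w /\ w <> @vzero C /\ R w.
Proof.
move=> HP HS H0 HR; elim=> [|n IH] v Pv v0 Sv; first by case: v0; apply: H0.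
case: (classic (T v = @vzero C)) => [/HR Rv|Tv0]; first by exists v.
exact: IH (HP _ Pv) Tv0 (HS _ _ Sv).
Qed.

Lemma sqrt_nat_neq0 n : sqrtC (n.+1)%:R != 0 :> C.
Proof. by rewrite sqrtC_eq0 pnatr_eq0. Qed.

Variable eps : C.
Hypothesis heps : 0 < eps.

Lemma eta_neq0 : etaE eps != 0.
Proof. by rewrite /etaE mulf_neq0 ?neq0Ci ?lt0r_neq0. Qed.

Lemma two_pw_neq0 (l : nat) : 2 * pw eps - l%:R != 0.
Proof.
apply/eqP => H.
have He : eps != 0 by rewrite lt0r_neq0.
have Hi : 'i != 0 :> C by rewrite neq0Ci.
set x := (1 - l%:R) * eps.
have xr : x \is Num.real. apply: realM; last exact: gtr0_real. by apply: rpredB; rewrite ?realn ?real1.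
have Hx : x * 'i = 2.
  have : (2 * pw eps - l%:R) * ('i * eps) = 0 by rewrite H mul0r.
  rewrite /pw /etaE /x => H2.
  have : (1 - l%:R) * eps * 'i - 2 = 0.
    rewrite -H2; field. by rewrite Hi He.
  by move/eqP; rewrite subr_eq0 => /eqP.
have : x ^+ 2 * ('i ^+ 2) = 4 by rewrite -exprMn Hx; ring.
rewrite sqrCi -(real_normK xr) => H4.
have : 0 <= `|x| ^+ 2 by rewrite exprn_ge0.
rewrite -oppr_le0.
have -> : - `|x| ^+ 2 = 4 :> C by rewrite -H4; ring.
by move=> H5; have := lt_le_trans (ltr0n C 4) H5; rewrite ltxx.
Qed.

Variable W : vec C -> Prop.
Hypothesis W0 : W (@vzero C).
Hypothesis Wadd : forall v w, W v -> W w -> W (vadd v w).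
Hypothesis Wscale : forall a v, W v -> W (vscale a v).
Hypothesis Wgen : forall A v, is_generator eps A -> W v -> W (A v).

Lemma W_b_up v : W v -> W (@b_up C v).
Proof. by move=> Wv; apply: (Wgen (@t_plus C)) => //; left. Qed.
Lemma W_b_dn v : W v -> W (@b_dn C v).
Proof.
move=> Wv; have := Wscale (etaE eps)^-1 _ (Wgen (u_plus eps) _ (or_intror (or_intror (or_introl erefl))) Wv).
congr W; apply: vext => j k l; rewrite /vscale /u_plus /opscale /vscale mulrA mulVf ?mul1r //.
exact: eta_neq0.
Qed.
Lemma W_b_dn_dag v : W v -> W (@b_dn_dag C v).
Proof. by move=> Wv; apply: (Wgen (@u_minus C)) => //; do 3 right; left. Qed.
Lemma W_b_up_dag v : W v -> W (@b_up_dag C v).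
Proof.
move=> Wv; have := Wscale (etaE eps)^-1 _ (Wgen (t_minus eps) _ (or_intror (or_introl erefl)) Wv).
congr W; apply: vext => j k l; rewrite /vscale /t_minus /opscale /vscale mulrA mulVf ?mul1r //.
exact: eta_neq0.
Qed.
Lemma W_s_plus v : W v -> W (@s_plus C v).
Proof.
move=> Wv.
have H1 := Wscale (etaE eps)^-1 _ (Wgen (v_plus eps) _ (or_intror (or_intror (or_intror (or_intror (or_introl erefl))))) Wv).
have H2 := Wscale (-1) _ (W_b_up _ (W_b_dn _ Wv)).
have := Wadd _ _ H1 H2; congr W; apply: vext => j k l.
rewrite /vscale /vadd /v_plus /opscale /opadd /opcomp /vscale /vadd.
have := eta_neq0; set e := etaE eps; set a := b_up _ _ _ _; set b := s_plus _ _ _ _ => ?.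
field; done.
Qed.
Lemma W_s_minus v : W v -> W (@s_minus C (pw eps) v).
Proof.
move=> Wv.
have H1 := Wscale (- (etaE eps)^-1) _ (Wgen (v_minus eps) _ (or_intror (or_intror (or_intror (or_intror (or_intror (or_introl erefl)))))) Wv).
have H2 := W_b_up_dag _ (W_b_dn_dag _ Wv).
have := Wadd _ _ H1 H2; congr W; apply: vext => j k l.
rewrite /vscale /vadd /v_minus /opscale /opsub /opcomp /vscale /vsub.
have := eta_neq0; set e := etaE eps; set a := b_up_dag _ _ _ _; set b := s_minus _ _ _ _ _ => ?.
field; done.
Qed.

Lemma W_vac v : W v -> fin_supp v -> v <> @vzero C -> W (@vac C).
Proof.
move=> Wv [N HN] v0.
have Sjv : Sj N v by move=> j k l H; apply: HN; lia.
have Skv : Sk N v by move=> j k l H; apply: HN; lia.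
have Slv : Sl N v by move=> j k l H; apply: HN; lia.
have [w1 [[W1 [Sk1 Sl1]] [w10 Rj1]]] :
  exists w, (W w /\ Sk N w /\ Sl N w) /\ w <> @vzero C /\ Sj 1 w.
  apply: (@descend (fun v => W v /\ Sk N v /\ Sl N v) (@b_up C) Sj (Sj 1) _ _ _ _ N v) => //.
  - move=> u [Wu [Sku Slu]]; split; first exact: W_b_up.
    by split; move=> j k l H; rewrite /b_up; [rewrite (Sku _ _ _ H) | rewrite (Slu _ _ _ H)]; rewrite mulr0.
  - by move=> n u Su j k l H; rewrite /b_up (Su j.+1 k l) ?mulr0.
  - by move=> u Su; apply: vext => j k l; exact: Su.
  - move=> u Hu [|j] k l H //; have := congr1 (fun f => f j k l) Hu.
    by rewrite /b_up /vzero => /eqP; rewrite mulf_eq0 (negbTE (sqrt_nat_neq0 _)) /= => /eqP.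
have [w2 [[W2 [Rj2 Sl2]] [w20 Rk2]]] :
  exists w, (W w /\ Sj 1 w /\ Sl N w) /\ w <> @vzero C /\ Sk 1 w.
  apply: (@descend (fun v => W v /\ Sj 1 v /\ Sl N v) (@b_dn C) Sk (Sk 1) _ _ _ _ N w1) => //.
  - move=> u [Wu [Sju Slu]]; split; first exact: W_b_dn.
    by split; move=> j k l H; rewrite /b_dn; [rewrite (Sju _ _ _ H) | rewrite (Slu _ _ _ H)]; rewrite mulr0.
  - by move=> n u Su j k l H; rewrite /b_dn (Su j k.+1 l) ?mulr0.
  - by move=> u Su; apply: vext => j k l; exact: Su.
  - move=> u Hu j [|k] l H //; have := congr1 (fun f => f j k l) Hu.
    by rewrite /b_dn /vzero => /eqP; rewrite mulf_eq0 (negbTE (sqrt_nat_neq0 _)) /= => /eqP.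
have [w3 [[W3 [Rj3 Rk3]] [w30 Rl3]]] :
  exists w, (W w /\ Sj 1 w /\ Sk 1 w) /\ w <> @vzero C /\ Sl 1 w.
  apply: (@descend (fun v => W v /\ Sj 1 v /\ Sk 1 v) (@s_plus C) Sl (Sl 1) _ _ _ _ N w2) => //.
  - move=> u [Wu [Sju Sku]]; split; first exact: W_s_plus.
    by split; move=> j k l H; rewrite /s_plus; [rewrite (Sju _ _ _ H) | rewrite (Sku _ _ _ H)]; rewrite mulr0.
  - by move=> n u Su j k l H; rewrite /s_plus (Su j k l.+1) ?mulr0.
  - by move=> u Su; apply: vext => j k l; exact: Su.
  - move=> u Hu j k [|l] H //; have := congr1 (fun f => f j k l) Hu.
    by rewrite /s_plus /vzero => /eqP; rewrite mulf_eq0 pnatr_eq0 /= => /eqP.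
have Hw3 : w3 = vscale (w3 0%N 0%N 0%N) (@vac C).
  apply: vext => -[|j] [|k] [|l]; rewrite /vscale /vac /= ?mulr1 ?mulr0 //;
  by first [exact: Rj3 | exact: Rk3 | exact: Rl3].
have c0 : w3 0%N 0%N 0%N != 0.
  apply/eqP => c0; apply: w30; by rewrite Hw3 c0; apply: vext => j k l; rewrite /vscale mul0r.
have := Wscale (w3 0%N 0%N 0%N)^-1 _ W3; congr W; rewrite {2}Hw3.
by apply: vext => j k l; rewrite /vscale mulrA mulVf // mul1r.
Qed.

Definition e (a b c : nat) : vec C :=
  fun j k l => if [&& j == a, k == b & l == c] then 1 else 0.

Lemma W_e_j j : W (@vac C) -> W (e j 0 0).
Proof.
move=> Wvac; elim: j => [|j IH]; first exact: Wvac.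
have := Wscale (sqrtC (j.+1)%:R)^-1 _ (W_b_up_dag _ IH); congr W.
apply: vext => -[|a] b c; rewrite /vscale /b_up_dag /e /=; first by rewrite !mulr0.
case: (eqVneq a j) => [->|Haj]; rewrite ?eqSS ?eqxx ?(negbTE Haj) /= ?mulr0 //.
by rewrite mulrA mulVf ?mul1r // sqrt_nat_neq0.
Qed.

Lemma W_e_k j k : W (@vac C) -> W (e j k 0).
Proof.
move=> Wvac; elim: k => [|k IH]; first exact: W_e_j.
have := Wscale (sqrtC (k.+1)%:R)^-1 _ (W_b_dn_dag _ IH); congr W.
apply: vext => a [|b] c; rewrite /vscale /b_dn_dag /e /=; first by rewrite /= ?andbF mulr0.
case: (eqVneq b k) => [->|Hbk]; rewrite ?eqSS ?eqxx ?(negbTE Hbk) /= ?andbF ?mulr0 //.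
by rewrite mulrA mulVf ?mul1r // sqrt_nat_neq0.
Qed.

Lemma W_e j k l : W (@vac C) -> W (e j k l).
Proof.
move=> Wvac; elim: l => [|l IH]; first exact: W_e_k.
have := Wscale (2 * pw eps - l%:R)^-1 _ (W_s_minus _ IH); congr W.
apply: vext => a b [|c]; rewrite /vscale /s_minus /e /=; first by rewrite /= ?andbF mulr0.
case: (eqVneq c l) => [->|Hcl]; rewrite ?eqSS ?eqxx ?(negbTE Hcl) /= ?andbF ?mulr0 //.
by rewrite mulrA mulVf ?mul1r // two_pw_neq0.
Qed.

Lemma W_all v : W (@vac C) -> fin_supp v -> W v.
Proof.
move=> Wvac [N HN].
have -> : v = \big[@vadd C/@vzero C]_(x : 'I_N * 'I_N * 'I_N)
              vscale (v x.1.1 x.1.2 x.2) (e x.1.1 x.1.2 x.2).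
  apply: vext => a b c.
  rewrite (big_morph (fun f : vec C => f a b c) (id1 := 0) (op1 := +%R)) //.
  rewrite /vscale /e.
  case: (boolP [&& (a < N)%N, (b < N)%N & (c < N)%N]) => [/and3P [Ha Hb Hc]|Hout].
    rewrite (bigD1 (Ordinal Ha, Ordinal Hb, Ordinal Hc)) //= !eqxx /= mulr1 big1 ?addr0 //.
    move=> [[i1 i2] i3] /= Hx.
    case: (boolP [&& a == i1, b == i2 & c == i3]) => [/and3P [/eqP e1 /eqP e2 /eqP e3]|_];
      last by rewrite mulr0.
    exfalso; move/negP: Hx; apply; apply/eqP.
    by congr (_, _, _); apply: val_inj.
  rewrite HN; last first.
    move: Hout; rewrite !negb_and -!leqNgt => /or3P [H|H|H]; lia.
  rewrite big1 // => -[[i1 i2] i3] _ /=.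
  case: (boolP [&& a == i1, b == i2 & c == i3]) => [/and3P [/eqP e1 /eqP e2 /eqP e3]|_];
    last by rewrite mulr0.
  by move: Hout; rewrite e1 e2 e3 !ltn_ord.
apply: big_ind => //.
move=> x _; exact: Wscale (W_e _ _ _ Wvac).
Qed.

End Irr.

Section Comm.
Variable C : numClosedFieldType.
Lemma sqK (x y : C) : sqrtC x * (sqrtC x * y) = x * y.
Proof. by rewrite mulrA -expr2 sqrtCK. Qed.

Lemma two_neq0 : (2:C) != 0. Proof. by rewrite pnatr_eq0. Qed.

End Comm.

Ltac gen_sqrt :=
  repeat match goal with |- context[sqrtC ?x] =>
    have := sqrtCK x; generalize (sqrtC x); intros ? ? end.

Ltac fin0 := first [ ring | field ].
Ltac fin :=
  (first [ fin0
        | match goal with H1 : _ ^+ 2 = _ |- _ => first [ring: H1 | field: H1] end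
        | match goal with H1 : _ ^+ 2 = _, H2 : _ ^+ 2 = _ |- _ =>
            first [ring: H1 H2 | field: H1 H2] end
        | match goal with H1 : _ ^+ 2 = _, H2 : _ ^+ 2 = _, H3 : _ ^+ 2 = _ |- _ =>
            first [ring: H1 H2 H3 | field: H1 H2 H3] end
        | match goal with H1 : _ ^+ 2 = _, H2 : _ ^+ 2 = _, H3 : _ ^+ 2 = _, H4 : _ ^+ 2 = _ |- _ =>
            first [ring: H1 H2 H3 H4 | field: H1 H2 H3 H4] end
        | match goal with H1 : _ ^+ 2 = _, H2 : _ ^+ 2 = _, H3 : _ ^+ 2 = _, H4 : _ ^+ 2 = _, H5 : _ ^+ 2 = _ |- _ =>
            first [ring: H1 H2 H3 H4 H5 | field: H1 H2 H3 H4 H5] end ]); try done.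

Ltac solve_comm :=
  move=> ? _; apply: functional_extensionality; case=> [|?];
  apply: functional_extensionality; case=> [|?]; apply: functional_extensionality; case=> [|?];
  cbv beta iota delta [comm opsub opcomp opscale opadd opid opzero vsub vadd vscale vzero
    t_plus t_minus u_plus u_minus v_plus v_minus l_up l_dn l_0
    b_up b_up_dag b_dn b_dn_dag s_plus s_minus s_z];
  repeat match goal with |- context[match ?n with 0%N => _ | S _ => _ end] => destruct n; cbv beta iota end;
  gen_sqrt.



Section Final.
Variable C : numClosedFieldType.
Variable eps : C.
Hypothesis heps : 0 < eps.

Lemma irr : irreducible_on_D (is_generator eps).
Proof.
move=> W Wfs W0 Wadd Wscale Wgen [v [Wv v0]] u Hu.
apply: (@W_all C eps heps W W0 Wadd Wscale Wgen u) => //.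
exact: (@W_vac C eps heps W Wadd Wscale Wgen v Wv (Wfs _ Wv) v0).
Qed.

Lemma lup_vac : l_up eps (@vac C) = @vac C.
Proof.
have He := @eta_neq0 C eps heps.
apply: vext => -[|j] [|k] [|l];
rewrite /l_up /opscale /opsub /opadd /opcomp /opid /vscale /vsub /vadd /b_up_dag /b_up /s_z /vac /=;
rewrite /pw; move: He; rewrite /etaE => He; field; by rewrite ?neq0Ci ?lt0r_neq0.
Qed.
Lemma ldn_vac : l_dn eps (@vac C) = @vac C.
Proof.
have He := @eta_neq0 C eps heps.
apply: vext => -[|j] [|k] [|l];
rewrite /l_dn /opscale /opsub /opadd /opcomp /opid /vscale /vsub /vadd /b_dn_dag /b_dn /s_z /vac /=;
rewrite /pw; move: He; rewrite /etaE => He; field; by rewrite ?neq0Ci ?lt0r_neq0.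
Qed.
Lemma lup_coef v : vac_coef (l_up eps v) = vac_coef v.
Proof.
have He := @eta_neq0 C eps heps.
rewrite /vac_coef /l_up /opscale /opsub /opadd /opcomp /opid /vscale /vsub /vadd /b_up_dag /b_up /s_z /=.
rewrite /pw; move: He; rewrite /etaE => He; field; by rewrite ?neq0Ci ?lt0r_neq0.
Qed.
Lemma ldn_coef v : vac_coef (l_dn eps v) = vac_coef v.
Proof.
have He := @eta_neq0 C eps heps.
rewrite /vac_coef /l_dn /opscale /opsub /opadd /opcomp /opid /vscale /vsub /vadd /b_dn_dag /b_dn /s_z /=.
rewrite /pw; move: He; rewrite /etaE => He; field; by rewrite ?neq0Ci ?lt0r_neq0.
Qed.
End Final.

Theorem mainTheorem2 (C : numClosedFieldType) (eps : C) (heps : 0 < eps) :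
  let etaE := etaE eps in
  let tp := @t_plus C in let tm := t_minus eps in
  let up := u_plus eps in let um := @u_minus C in
  let vp := v_plus eps in let vm := v_minus eps in
  let lu := l_up eps in let ld := l_dn eps in let l0 := @l_0 C in
  let Z := @opzero C in
  (* the operators preserve the dense domain *)
  (forall A v, is_generator eps A -> fin_supp v -> fin_supp (A v)) /\
  (* commutation relations of g *)
  (opeq (comm up tp) Z /\ opeq (comm up tm) Z /\
   opeq (comm um tp) Z /\ opeq (comm um tm) Z /\
   opeq (comm up vp) Z /\ opeq (comm um vm) Z /\
   opeq (comm tp vp) Z /\ opeq (comm tm vm) Z /\
   opeq (comm lu up) Z /\ opeq (comm lu um) Z /\
   opeq (comm ld tp) Z /\ opeq (comm ld tm) Z /\
   opeq (comm lu ld) Z) /\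
  (opeq (comm lu tp) (opscale (- etaE) tp) /\ opeq (comm lu tm) (opscale etaE tm) /\
   opeq (comm ld up) (opscale (- etaE) up) /\ opeq (comm ld um) (opscale etaE um) /\
   opeq (comm up vm) (opscale etaE tm) /\ opeq (comm um vp) (opscale (- etaE) tp) /\
   opeq (comm tp vm) (opscale etaE um) /\ opeq (comm tm vp) (opscale (- etaE) up)) /\
  (opeq (comm lu vp) (opscale (- etaE) vp) /\ opeq (comm lu vm) (opscale etaE vm) /\
   opeq (comm ld vp) (opscale (- etaE) vp) /\ opeq (comm ld vm) (opscale etaE vm) /\
   opeq (comm vp vm) (opscale etaE (opadd lu ld)) /\
   opeq (comm tp tm) (opscale etaE l0) /\ opeq (comm up um) (opscale etaE l0)) /\
  (opeq (comm lu l0) Z /\ opeq (comm ld l0) Z /\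
   opeq (comm up l0) Z /\ opeq (comm um l0) Z /\
   opeq (comm vp l0) Z /\ opeq (comm vm l0) Z /\
   opeq (comm tp l0) Z /\ opeq (comm tm l0) Z) /\
  (* irreducibility *)
  irreducible_on_D (is_generator eps) /\
  (* boundary requirements *)
  (lu (@vac C) = @vac C /\ l0 (@vac C) = @vac C /\ ld (@vac C) = @vac C) /\
  (forall v, fin_supp v ->
     vac_coef (lu v) = vac_coef v /\ vac_coef (l0 v) = vac_coef v /\
     vac_coef (ld v) = vac_coef v) /\
  (tp (@vac C) = @vzero C /\ up (@vac C) = @vzero C /\ vp (@vac C) = @vzero C) /\
  (forall v, fin_supp v ->
     vac_coef (tm v) = 0 /\ vac_coef (um v) = 0 /\ vac_coef (vm v) = 0).
Proof.
cbv zeta.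
repeat split.
- move=> A v HA Hv; exact: fs_gen HA Hv.
all: try (solve_comm; fin; fail).
- exact: irr.
all: try exact: lup_vac.
all: try exact: ldn_vac.
all: try exact: lup_coef.
all: try exact: ldn_coef.
all: try by [].
all: try (apply: vext => j k l; rewrite /t_plus /u_plus /v_plus /opscale /opadd /opcomp /vscale /vadd /b_dn /b_up /s_plus /vac /vzero /= ?andbF ?mulr0 ?addr0 ?mulr0 //; fail).
all: try (rewrite /vac_coef /t_minus /u_minus /v_minus /opscale /opsub /opcomp /vscale /vsub /b_up_dag /b_dn_dag /s_minus /=; rewrite ?subrr ?mulr0 //; fail).
Qed.
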